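(* Let $\Lambda$ be a row-finite $k$-graph with no sources, $S$ a semigroup, $\eta:\Lambda\to S$ a functor and $\Lambda\times_\eta S$ the associated skew product graph. If $\Lambda\times_\eta S$ is cofinal then $\Lambda$ is cofinal.
   Context: All semigroups are countable, cancellative, with identity. A $k$-graph is a countable category $\Lambda$ with a functor $d:\Lambda\to\mathbb{N}^k$ with unique factorisation; $\Lambda^n=d^{-1}(n)$, $\Lambda^0$ = vertices, $uXv=\{\lambda\in X:r(\lambda)=u,s(\lambda)=v\}$; row-finite: $v\Lambda^n$ finite; no sources: $v\Lambda^n\ne\emptyset$ for $n\ne0$. The skew product $\Lambda\times_\eta S$ has vertices $\Lambda^0\times S$, morphisms $\Lambda\times S$, $r(\lambda,t)=(r(\lambda),t)$, $s(\lambda,t)=(s(\lambda),t\eta(\lambda))$, $(\lambda,t)(\mu,t\eta(\lambda))=(\lambda\mu,t)$, $d(\lambda,t)=d(\lambda)$. A $k$-graph $\Gamma$ is cofinal if for all $v,w\in\Gamma^0$ there is $N\in\mathbb{N}^k$ with $v\Gamma s(\alpha)\ne\emptyset$ for every $\alpha\in w\Gamma^N$. *)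

(* Defs.v *)
From mathcomp Require Import all_boot.
Set Implicit Arguments. Unset Strict Implicit. Unset Printing Implicit Defensive.

Definition Nk (k : nat) := {ffun 'I_k -> nat}.
Definition Nk0 (k : nat) : Nk k := [ffun => 0%N].
Definition Nkadd (k : nat) (m n : Nk k) : Nk k := [ffun i => m i + n i].

Record kgraph (k : nat) := KGraph {
  kV : countType;
  kM : countType;
  kr : kM -> kV;
  ks : kM -> kV;
  kid : kV -> kM;
  kcomp : kM -> kM -> kM;              (* composition lam mu, meaningful when s lam = r mu *)
  kd : kM -> Nk k;
  kr_id : forall v, kr (kid v) = v;
  ks_id : forall v, ks (kid v) = v;
  kr_comp : forall l m, ks l = kr m -> kr (kcomp l m) = kr l;
  ks_comp : forall l m, ks l = kr m -> ks (kcomp l m) = ks m;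
  kid_l : forall l, kcomp (kid (kr l)) l = l;
  kid_r : forall l, kcomp l (kid (ks l)) = l;
  kcompA : forall l m n, ks l = kr m -> ks m = kr n ->
     kcomp l (kcomp m n) = kcomp (kcomp l m) n;
  kd_id : forall v, kd (kid v) = Nk0 k;
  kd_comp : forall l m, ks l = kr m -> kd (kcomp l m) = Nkadd (kd l) (kd m);
  kfact : forall l (m n : Nk k), kd l = Nkadd m n ->
     exists mu nu, [/\ ks mu = kr nu, l = kcomp mu nu, kd mu = m & kd nu = n];
  kfact_uniq : forall mu nu mu' nu',
     ks mu = kr nu -> ks mu' = kr nu' -> kd mu = kd mu' -> kd nu = kd nu' ->
     kcomp mu nu = kcomp mu' nu' -> mu = mu' /\ nu = nu'
}.

Definition row_finite k (L : kgraph k) : Prop :=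
  forall (v : kV L) (n : Nk k), exists lst : seq (kM L),
    forall l, kr l = v -> kd l = n -> l \in lst.

Definition no_sources k (L : kgraph k) : Prop :=
  forall (v : kV L) (n : Nk k), exists l, kr l = v /\ kd l = n.

(* Cofinality only involves the morphisms, r, s and d. *)
Definition cofinal_data k (V M : Type) (r s : M -> V) (d : M -> Nk k) : Prop :=
  forall v w : V, exists N : Nk k, forall a : M, r a = w -> d a = N ->
    exists mu : M, r mu = v /\ s mu = s a.

Definition cofinal k (L : kgraph k) : Prop := cofinal_data (@kr k L) (@ks k L) (@kd k L).

(* A countable cancellative semigroup with identity (i.e. monoid). *)
Record csemigroup := CSemigroup {
  sT : countType;
  sop : sT -> sT -> sT;
  sone : sT;
  sopA : forall x y z, sop x (sop y z) = sop (sop x y) z;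
  sone_l : forall x, sop sone x = x;
  sone_r : forall x, sop x sone = x;
  scancel_l : forall x y z, sop x y = sop x z -> y = z;
  scancel_r : forall x y z, sop y x = sop z x -> y = z
}.

Definition is_functor k (L : kgraph k) (S : csemigroup) (eta : kM L -> sT S) : Prop :=
  (forall v, eta (kid v) = sone S) /\
  (forall l m, ks l = kr m -> eta (kcomp l m) = sop (eta l) (eta m)).

Definition skew_r k (L : kgraph k) (S : csemigroup) (eta : kM L -> sT S)
  (x : kM L * sT S) : kV L * sT S := (kr x.1, x.2).
Definition skew_s k (L : kgraph k) (S : csemigroup) (eta : kM L -> sT S)
  (x : kM L * sT S) : kV L * sT S := (ks x.1, sop x.2 (eta x.1)).
Definition skew_d k (L : kgraph k) (S : csemigroup) (eta : kM L -> sT S)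
  (x : kM L * sT S) : Nk k := kd x.1.
(* composition (l,t)(m, t eta(l)) = (lm, t) *)
Definition skew_comp k (L : kgraph k) (S : csemigroup) (eta : kM L -> sT S)
  (x y : kM L * sT S) : kM L * sT S := (kcomp x.1 y.1, x.2).

Definition skew_cofinal k (L : kgraph k) (S : csemigroup) (eta : kM L -> sT S) : Prop :=
  cofinal_data (skew_r eta) (skew_s eta) (skew_d eta).

(* Main.v *)
Require Import Defs.
From mathcomp Require Import all_boot.

Theorem corollary4p8 (k : nat) (L : kgraph k) (S : csemigroup) (eta : kM L -> sT S) :
  row_finite L -> no_sources L -> is_functor eta ->
  skew_cofinal eta -> cofinal L.
Proof.
move=> _ _ _ H v w.
have [N HN] := H (v, sone S) (w, sone S).
exists N => a ra da.
have Hr0 : skew_r eta (a, sone S) = (w, sone S) by rewrite /skew_r /= ra.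
have [x [Hr Hs]] := HN (a, sone S) Hr0 da.
exists x.1; split.
  by move: Hr; rewrite /skew_r; case.
by move: Hs; rewrite /skew_s; case.
Qed.
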